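(* Let $G$ be a $k$-uniform $s$-cycle with $1\le s\le k-1$ and $k=q(k-s)\ge 3$ for a positive integer $q$. Then $G$ is regular and $\lambda(\mathcal{Q})=2q$. Assume further that $k$ is even. If either $q$ is odd, or $q=2^{t_0}(2l_0+1)$ for a positive integer $t_0$ and a nonnegative integer $l_0$ and the number $m$ of edges of $G$ is a multiple of $2^{t_0}$, then also $\lambda(\mathcal{L})=2q$.
   Context: A $k$-uniform $s$-cycle with $m$ edges has vertex set $\mathbb{Z}_n$, $n=m(k-s)$ (vertex $n+i$ identified with $i$), and edges $e_j=\{j(k-s)+1,\ldots,j(k-s)+k\}$, $j=0,\ldots,m-1$; it is assumed that $n\ge 2k-s$. A hypergraph is regular if all degrees $d_i$ (numbers of edges containing vertex $i$) are equal. For a real tensor $\mathcal{T}$ of order $k$ and dimension $n$, $\lambda\in\mathbb{R}$ is an H-eigenvalue if there is nonzero $\mathbf{x}\in\mathbb{R}^n$ with $(\mathcal{T}\mathbf{x}^{k-1})_i=\lambda x_i^{k-1}$ for all $i$, where $(\mathcal{T}\mathbf{x}^{k-1})_i=\sum_{i_2,\ldots,i_k}t_{ii_2\ldots i_k}x_{i_2}\cdots x_{i_k}$; $\lambda(\mathcal{T})$ is the largest H-eigenvalue. The adjacency tensor $\mathcal{A}$ has entries $1/(k-1)!$ at $(i_1,\ldots,i_k)$ with $\{i_1,\ldots,i_k\}$ an edge and $0$ otherwise; $\mathcal{D}$ is diagonal with entries $d_i$; $\mathcal{L}=\mathcal{D}-\mathcal{A}$, $\mathcal{Q}=\mathcal{D}+\mathcal{A}$.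 *)

(* Defs.v *)
From HB Require Import structures.
From mathcomp Require Import all_boot all_order all_algebra.
From mathcomp Require Import reals.
Unset Printing Implicit Defensive.
Import Order.TTheory GRing.Theory Num.Theory.
Local Open Scope ring_scope.

Definition nverts (k s m : nat) : nat := (m * (k - s))%N.

(* Vertex set Z_n is represented by 'I_n (vertex i stands for i mod n;
   vertex n is identified with 0).  Edge e_j = {j(k-s)+1, ..., j(k-s)+k} mod n. *)
Definition scycle_edge (k s m j : nat) : {set 'I_(nverts k s m)} :=
  [set v : 'I_(nverts k s m) |
     [exists t : 'I_k, (v : nat) == ((j * (k - s) + t.+1) %% nverts k s m)%N]].

Definition scycle_deg (k s m : nat) (i : 'I_(nverts k s m)) : nat :=
  #|[set j : 'I_m | i \in scycle_edge k s m j]|.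

Definition is_regular (k s m : nat) : Prop :=
  forall i j : 'I_(nverts k s m), scycle_deg k s m i = scycle_deg k s m j.

(* A real tensor of order k and dimension n: entry t_{i i_2 ... i_k} is
   T i f with f : 'I_(k-1) -> 'I_n listing (i_2,...,i_k). *)
Definition tensor (R : Type) (k n : nat) := 'I_n -> {ffun 'I_k.-1 -> 'I_n} -> R.

Definition tensor_apply (R : realType) (k n : nat) (T : tensor R k n)
  (x : 'I_n -> R) (i : 'I_n) : R :=
  \sum_(f : {ffun 'I_k.-1 -> 'I_n}) T i f * \prod_(j < k.-1) x (f j).

Definition is_H_eigenvalue (R : realType) (k n : nat) (T : tensor R k n)
  (lam : R) : Prop :=
  exists x : 'I_n -> R, (exists i, x i != 0) /\
    forall i, tensor_apply R k n T x i = lam * x i ^+ k.-1.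

Definition is_largest_H_eigenvalue (R : realType) (k n : nat) (T : tensor R k n)
  (lam : R) : Prop :=
  is_H_eigenvalue R k n T lam /\ forall mu, is_H_eigenvalue R k n T mu -> mu <= lam.

Definition adj_tensor (R : realType) (k s m : nat) : tensor R k (nverts k s m) :=
  fun i f =>
    if [exists j : 'I_m, i |: [set f t | t : 'I_k.-1] == scycle_edge k s m j]
    then ((k.-1)`!%:R)^-1 else 0.

Definition deg_tensor (R : realType) (k s m : nat) : tensor R k (nverts k s m) :=
  fun i f => if [forall t : 'I_k.-1, f t == i] then (scycle_deg k s m i)%:R else 0.

Definition lap_tensor (R : realType) (k s m : nat) : tensor R k (nverts k s m) :=
  fun i f => deg_tensor R k s m i f - adj_tensor R k s m i f.

Definition slap_tensor (R : realType) (k s m : nat) : tensor R k (nverts k s m) :=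
  fun i f => deg_tensor R k s m i f + adj_tensor R k s m i f.

(* Main.v *)
Require Import Defs.
From HB Require Import structures.
From mathcomp Require Import all_boot all_order all_algebra.
From mathcomp Require Import reals zify ring lra.
Import Order.TTheory GRing.Theory Num.Theory.

Definition wv (n v : nat) : nat := (v + n - 1) %% n.

Lemma mod2 x m : x < 2 * m -> x %% m = if x < m then x else x - m.
Proof.
move=> h; case: ifP => h2; first by rewrite modn_small.
have -> : x = (x - m) + m by lia.
rewrite modnDr modn_small //; lia.
Qed.

Lemma wvE n a : 0 < n -> wv n ((a + 1) %% n) = a %% n.
Proof.
move=> n0; rewrite /wv.
have ha := ltn_pmod a n0.
rewrite -modnDml.
case: (ltnP (a %% n + 1) n) => h.
  rewrite (modn_small h).
  have -> : a %% n + 1 + n - 1 = a %% n + n by lia.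
  by rewrite modnDr modn_small.
have -> : a %% n + 1 = n by lia.
rewrite modnn add0n modn_small; lia.
Qed.

Lemma wvK n v : v < n -> (wv n v + 1) %% n = v.
Proof.
move=> vn; rewrite /wv modnDml.
case: v vn => [|v] vn.
  have -> : 0 + n - 1 + 1 = n by lia.
  by rewrite modnn.
have -> : v.+1 + n - 1 + 1 = v.+1 + n by lia.
by rewrite modnDr modn_small.
Qed.

Lemma wv_lt n v : 0 < n -> wv n v < n.
Proof. by move=> n0; rewrite /wv ltn_pmod. Qed.

Lemma blk_phi m r j t : 0 < r -> j < m ->
  ((j * r + t) %% (m * r)) %/ r = (j + t %/ r) %% m.
Proof.
move=> r0 jm.
rewrite divn_modl; last by apply: dvdn_mull.
by rewrite mulnK // divnMDl.
Qed.

Lemma cell_phi m r j t : ((j * r + t) %% (m * r)) %% r = t %% r.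
Proof. by rewrite (modn_dvdm _ (dvdn_mull m (dvdnn r))) modnMDl. Qed.

Lemma mem_edge k s m q (v : 'I_(nverts k s m)) j : 0 < k - s -> k = q * (k - s) ->
  q < m -> j < m ->
  (v \in scycle_edge k s m j) = ((wv (nverts k s m) v %/ (k - s) + m - j) %% m < q).
Proof.
move=> r0 hk qm jm.
have n0 : 0 < nverts k s m by rewrite /nverts muln_gt0 r0; lia.
rewrite inE; apply/existsP/idP.
  case=> t /eqP hv.
  rewrite hv -(addn1 t) addnA wvE // /nverts blk_phi //.
  have : t %/ (k - s) < q by rewrite ltn_divLR // -hk.
  move: (t %/ (k - s)) => d dq.
  rewrite (mod2 (j + d)); last lia.
  case: ifP => h1; rewrite mod2; try lia; case: ifP; lia.
move=> hd.
set w := wv (nverts k s m) v.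
have wn : w < nverts k s m by apply: wv_lt.
set b := w %/ (k - s).
set c := w %% (k - s).
have bm : b < m by rewrite /b ltn_divLR // -/(nverts k s m).
have cr : c < k - s by rewrite /c ltn_pmod.
have hw : w = b * (k - s) + c by rewrite /b /c -divn_eq.
set d := (b + m - j) %% m in hd.
have hjd : j + d = b \/ j + d = b + m.
  move: hd; rewrite /d mod2; last lia.
  case: ifP; lia.
have tk : d * (k - s) + c < k.
  rewrite [X in _ < X]hk; apply: (@leq_trans (d * (k - s) + (k - s))); first by rewrite ltn_add2l.
  by rewrite -mulSnr leq_mul2r hd orbT.
exists (Ordinal tk) => /=.
rewrite -(@wvK _ _ (ltn_ord v)) -/w hw.
have -> : j * (k - s) + (d * (k - s) + c).+1 = (j + d) * (k - s) + c + 1.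
  by rewrite mulnDl; lia.
case: hjd => ->; first by [].
have -> : (b + m) * (k - s) + c + 1 = (b * (k - s) + c + 1) + nverts k s m.
  by rewrite /nverts mulnDl; lia.
by rewrite modnDr.
Qed.

Lemma card_lt_ord m q : q <= m -> #|[set u : 'I_m | u < q]| = q.
Proof.
move=> qm.
have -> : [set u : 'I_m | u < q] = widen_ord qm @: [set: 'I_q].
  apply/setP => u; rewrite inE; apply/idP/imsetP.
    by move=> h; exists (Ordinal h) => //; apply: val_inj.
  by case=> x _ ->; rewrite /= ltn_ord.
rewrite card_imset ?cardsT ?card_ord // => x y /(congr1 val) e; exact: val_inj.
Qed.

Lemma card_window m q b : q <= m -> b < m ->
  #|[set j : 'I_m | (b + m - j) %% m < q]| = q.
Proof.
move=> qm bm.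
have m0 : 0 < m by lia.
pose hf (j : 'I_m) : 'I_m := Ordinal (ltn_pmod (b + m - j) m0).
have hinj : injective hf.
  move=> j1 j2 /(congr1 val) /=.
  have h1 := ltn_ord j1; have h2 := ltn_ord j2.
  rewrite (mod2 (b + m - j1)); last lia.
  rewrite (mod2 (b + m - j2)); last lia.
  move=> e; apply: val_inj => /=; move: e.
  case: ifP; case: ifP; lia.
have -> : [set j : 'I_m | (b + m - j) %% m < q] = hf @^-1: [set u : 'I_m | u < q].
  by apply/setP => j; rewrite !inE.
by rewrite card_preimset // card_lt_ord.
Qed.

Lemma deg_eq k s m q (i : 'I_(nverts k s m)) : 0 < k - s -> k = q * (k - s) ->
  q < m -> scycle_deg k s m i = q.
Proof.
move=> r0 hk qm.
rewrite /scycle_deg.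
have bm : wv (nverts k s m) i %/ (k - s) < m.
  by rewrite ltn_divLR // -/(nverts k s m) wv_lt // /nverts muln_gt0 r0; lia.
rewrite -(@card_window m q _ (ltnW qm) bm).
by apply: eq_card => j; rewrite [LHS]in_set [RHS]in_set (@mem_edge k s m q i j r0 hk qm (ltn_ord j)).
Qed.
Lemma arith_inj m q j j' : q < m -> 0 < q -> j < m -> j' < m ->
  (j + m - j') %% m < q ->
  (((j + m - 1) %% m + m - j) %% m < q) = (((j + m - 1) %% m + m - j') %% m < q) ->
  j = j'.
Proof.
move=> qm q0 jm jm'.
have hx : (j + m - 1) %% m < m by lia.
move: hx; set x := (j + m - 1) %% m => hx.
have ex : x = (if j + m - 1 < m then j + m - 1 else j + m - 1 - m) by rewrite /x mod2; lia.
rewrite (mod2 (j + m - j')); last lia.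
rewrite (mod2 (x + m - j)); last lia.
rewrite (mod2 (x + m - j')); last lia.
move: ex; do 4 case: ifP; lia.
Qed.

Lemma vblk k s m b (n0 : 0 < nverts k s m) : 0 < k - s -> b < m ->
  wv (nverts k s m) (Ordinal (ltn_pmod (b * (k - s) + 1) n0)) %/ (k - s) = b.
Proof.
move=> r0 bm /=.
by rewrite -[b * (k - s)]addn0 wvE // /nverts blk_phi // div0n addn0 modn_small.
Qed.

Lemma edge_inj k s m q (j j' : 'I_m) : 0 < k - s -> k = q * (k - s) -> q < m -> 0 < q ->
  scycle_edge k s m j = scycle_edge k s m j' -> j = j'.
Proof.
move=> r0 hk qm q0 e.
have n0 : 0 < nverts k s m by rewrite /nverts muln_gt0 r0; lia.
have hm : 0 < m by lia.
have key : forall b, b < m -> ((b + m - j) %% m < q) = ((b + m - j') %% m < q).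
  move=> b bm.
  pose v := Ordinal (ltn_pmod (b * (k - s) + 1) n0).
  have : (v \in scycle_edge k s m j) = (v \in scycle_edge k s m j') by rewrite e.
  by rewrite (@mem_edge k s m q v j r0 hk qm (ltn_ord j)) (@mem_edge k s m q v j' r0 hk qm (ltn_ord j')) vblk.
apply: ord_inj; apply: (@arith_inj m q j j') => //.
- rewrite -key //.
  have -> : j + m - j = m by lia.
  by rewrite modnn.
- apply: key; apply: ltn_pmod; lia.
Qed.

Lemma k_lt_n k s m q : 0 < k - s -> k = q * (k - s) -> q < m -> k < nverts k s m.
Proof. by move=> r0 hk qm; rewrite {1}hk /nverts ltn_mul2r r0 qm. Qed.

Lemma edge_card k s m q j : 0 < k - s -> k = q * (k - s) -> q < m ->
  #|scycle_edge k s m j| = k.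
Proof.
move=> r0 hk qm.
have kn := @k_lt_n k s m q r0 hk qm.
have n0 : 0 < nverts k s m by lia.
pose phi (t : 'I_k) : 'I_(nverts k s m) := Ordinal (ltn_pmod (j * (k - s) + t.+1) n0).
have -> : scycle_edge k s m j = [set phi t | t in 'I_k].
  apply/setP => v; rewrite inE; apply/existsP/imsetP.
    by case=> t /eqP h; exists t => //; apply: val_inj.
  by case=> t _ ->; exists t.
rewrite card_imset ?card_ord // => t1 t2 /(congr1 val) /= /eqP.
have h1 := ltn_ord t1; have h2 := ltn_ord t2.
rewrite -!addSnnS eqn_modDl !modn_small; try lia.
by move/eqP => h; apply: val_inj.
Qed.

Lemma F_char (T : finType) (K : nat) (i : T) (E : {set T}) (f : {ffun 'I_K -> T}) :
  #|E| = K.+1 -> i \in E ->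
  (i |: [set f t | t : 'I_K] == E) =
  (f \in ffun_on [pred v | v \in E :\ i]) && injectiveb f.
Proof.
move=> cE iE.
have cED : #|E :\ i| = K by move: cE; rewrite (cardsD1 i) iE; case.
have cS : #|[set f t | t : 'I_K]| <= K.
  by apply: (leq_trans (leq_imset_card _ _)); rewrite cardT size_enum_ord.
apply/idP/idP.
  move=> /eqP hE.
  have hc : #|i |: [set f t | t : 'I_K]| = K.+1 by rewrite hE.
  move: hc; rewrite cardsU1.
  case iS : (i \in [set f t | t : 'I_K]) => /= hc; first by lia.
  have cS' : #|[set f t | t : 'I_K]| = K by lia.
  apply/andP; split.
    apply/ffun_onP => t.
    have ft : f t \in [set f t | t : 'I_K] by apply: imset_f.
    rewrite !inE; apply/andP; split.
      by apply/eqP => e; rewrite -e ft in iS.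
    by rewrite -hE in_setU1 ft orbT.
  apply/injectiveP => t1 t2 e.
  have /imset_injP h : #|[set f t | t : 'I_K]| == #|'I_K| by rewrite cS' card_ord.
  by apply: h.
case/andP => /ffun_onP hon /injectiveP hinj.
have sub : [set f t | t : 'I_K] \subset E :\ i.
  by apply/subsetP => v /imsetP [t _ ->]; have := hon t; rewrite inE.
have eqS : [set f t | t : 'I_K] = E :\ i.
  apply/eqP; rewrite eqEcard sub cED.
  by rewrite /= (card_imset _ hinj) cardT size_enum_ord.
by rewrite eqS setD1K.
Qed.

Lemma F_card (T : finType) (K : nat) (i : T) (E : {set T}) :
  #|E| = K.+1 -> i \in E ->
  #|[set f : {ffun 'I_K -> T} | i |: [set f t | t : 'I_K] == E]| = K`!.
Proof.
move=> cE iE.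
have cED : #|E :\ i| = K by move: cE; rewrite (cardsD1 i) iE; case.
rewrite -ffactnn.
have -> : K ^_ K = #|[pred v | v \in E :\ i]| ^_ #|'I_K|.
  by rewrite card_ord -cED; congr (_ ^_ _); apply: eq_card.
rewrite -card_inj_ffuns_on; apply: eq_card => f; rewrite !inE.
exact: F_char.
Qed.

Lemma sum_window1 g N : 0 < g -> \sum_(c < g) (g %| N + c) = 1.
Proof.
move=> g0.
have hc : (g - N %% g) %% g < g by apply: ltn_pmod.
rewrite (bigD1 (Ordinal hc)) //= big1 ?addn0.
  suff -> : g %| N + (g - N %% g) %% g by [].
  rewrite /dvdn -modnDm modn_mod -modnDm modn_mod.
  have := ltn_pmod N g0; move: (N %% g) => a ha.
  case: (posnP a) => [->|a0]; first by rewrite subn0 modnn mod0n add0n mod0n.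
  have e : (g - a) %% g = g - a by rewrite modn_small //; lia.
  rewrite modn_mod e subnKC ?modnn //; lia.
move=> c hc'; apply/eqP; rewrite eqb0; apply/negP => hd; move/eqP: hc'; apply.
apply: val_inj => /=; move: hd; rewrite /dvdn -modnDml.
have := ltn_pmod N g0; have := ltn_ord c; move: (N %% g) (nat_of_ord c) => a c' hc1 ha.
rewrite (mod2 (a + c')); last lia.
rewrite (mod2 (g - a)); last lia.
case: ifP; case: ifP; lia.
Qed.

Lemma sum_window g p j : 0 < g -> \sum_(u < g * p) (g %| j + u) = p.
Proof.
move=> g0; elim: p => [|p IH]; first by rewrite muln0 big_ord0.
rewrite -(big_mkord (fun _ => true) (fun u => (g %| j + u) : nat)) mulnS (big_cat_nat _ (leq_addr _ _)) //=.
have e : \sum_(g <= i < g + g * p) (g %| j + i) = \sum_(0 <= i < g * p) (g %| j + (i + g)).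
  by rewrite -{1}(add0n g) big_addn addKn.
rewrite e big_mkord sum_window1 // add1n -[in RHS]IH; congr (_.+1).
rewrite big_mkord; apply: eq_bigr => u _.
by rewrite addnA dvdn_addl.
Qed.

Lemma sum_split a b (F : nat -> nat) :
  \sum_(t < a + b) F t = \sum_(t < a) F t + \sum_(c < b) F (c + a).
Proof.
rewrite -!(big_mkord (fun _ => true)) (@big_cat_nat _ _ _ a) ?leq_addr //.
by congr (_ + _); rewrite -{1}(add0n a) big_addn addKn big_mkord.
Qed.

Lemma sum_blocks g q r j : 0 < r ->
  \sum_(t < q * r) ((t %% r == 0) && (g %| j + t %/ r)) = \sum_(u < q) (g %| j + u).
Proof.
move=> r0; elim: q => [|q IH]; first by rewrite mul0n !big_ord0.
rewrite big_ord_recr /= -IH mulSnr.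
rewrite (sum_split _ _ (fun t => ((t %% r == 0) && (g %| j + t %/ r)) : nat)).
congr (_ + _).
rewrite (bigD1 (Ordinal r0)) //= big1 ?addn0.
  by rewrite add0n modnMl eqxx /= mulnK.
move=> c hc; rewrite addnC modnMDl modn_small //=.
suff -> : (c == 0 :> nat) = false by [].
by apply/negP => /eqP h; move/eqP: hc; apply; apply: val_inj.
Qed.

Lemma odd_qg q m : 0 < q ->
  (odd q \/ exists t0 l0 : nat, 0 < t0 /\ q = 2 ^ t0 * (2 * l0 + 1) /\ 2 ^ t0 %| m) ->
  odd (q %/ gcdn q m).
Proof.
move=> q0 [oq|[t0 [l0 [t0p [hq hm]]]]].
  have e : q = q %/ gcdn q m * gcdn q m by rewrite divnK // dvdn_gcdl.
  by move: oq; rewrite {1}e oddM; case/andP.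
have hg : 2 ^ t0 %| gcdn q m by rewrite dvdn_gcd hm hq dvdn_mulr.
have e1 : q = q %/ gcdn q m * gcdn q m by rewrite divnK // dvdn_gcdl.
have e2 : gcdn q m = gcdn q m %/ 2 ^ t0 * 2 ^ t0 by rewrite divnK.
have : 2 ^ t0 * (2 * l0 + 1) = 2 ^ t0 * (q %/ gcdn q m * (gcdn q m %/ 2 ^ t0)).
  rewrite -hq {1}e1 [X in _ * X = _]e2.
  move: (q %/ gcdn q m) (gcdn q m %/ 2 ^ t0) (2 ^ t0) => a b c; nia.
move/eqP; rewrite eqn_pmul2l ?expn_gt0 // => /eqP e3.
have : odd (2 * l0 + 1) by rewrite addn1 /= mul2n odd_double.
by rewrite e3 oddM; case/andP.
Qed.
Lemma oddpred k : 0 < k -> ~~ odd k -> odd k.-1.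
Proof. by case: k => // k _ /=; rewrite negbK. Qed.

Local Open Scope ring_scope.

Lemma F_prod (R : comRingType) (T : finType) (K : nat) (i : T) (E : {set T})
  (x : T -> R) (f : {ffun 'I_K -> T}) :
  #|E| = K.+1 -> i \in E -> i |: [set f t | t : 'I_K] == E ->
  \prod_(t < K) x (f t) = \prod_(v in E :\ i) x v.
Proof.
move=> cE iE; rewrite F_char // => /andP [/ffun_onP hon /injectiveP hinj].
have cED : #|E :\ i| = K by move: cE; rewrite (cardsD1 i) iE; case.
have sub : [set f t | t : 'I_K] \subset E :\ i.
  by apply/subsetP => v /imsetP [t _ ->]; have := hon t; rewrite inE.
have eqS : [set f t | t : 'I_K] = E :\ i.
  apply/eqP; rewrite eqEcard sub cED.
  by rewrite /= (card_imset _ hinj) cardT size_enum_ord.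
rewrite -eqS big_imset //=; last by move=> a b _ _; apply: hinj.
Qed.

Lemma deg_part (R : realType) k s m (x : 'I_(nverts k s m) -> R) i :
  \sum_(f : {ffun 'I_k.-1 -> 'I_(nverts k s m)}) deg_tensor R k s m i f * \prod_(t < k.-1) x (f t)
  = (scycle_deg k s m i)%:R * x i ^+ k.-1.
Proof.
rewrite (bigD1 [ffun => i]) //= [X in _ + X]big1 ?addr0.
  rewrite /deg_tensor; have -> : [forall t : 'I_k.-1, ([ffun=> i] : {ffun 'I_k.-1 -> 'I_(nverts k s m)}) t == i].
    by apply/forallP => t; rewrite ffunE.
  congr (_ * _); rewrite (eq_bigr (fun _ => x i)); last by move=> t _; rewrite ffunE.
  by rewrite prodr_const card_ord.
move=> f hf; rewrite /deg_tensor; case: ifP; last by rewrite mul0r.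
move=> /forallP h; exfalso; move/eqP: hf; apply; apply/ffunP => t.
by rewrite ffunE; apply/eqP.
Qed.

Lemma adj_part (R : realType) k s m q (x : 'I_(nverts k s m) -> R) i :
  (0 < k - s)%N -> k = (q * (k - s))%N -> (q < m)%N -> (0 < q)%N -> (0 < k)%N ->
  \sum_(f : {ffun 'I_k.-1 -> 'I_(nverts k s m)}) adj_tensor R k s m i f * \prod_(t < k.-1) x (f t)
  = \sum_(j : 'I_m | i \in scycle_edge k s m j) \prod_(v in scycle_edge k s m j :\ i) x v.
Proof.
move=> r0 hk qm q0 k0.
set c := ((k.-1)`!%:R : R)^-1.
pose A (j : 'I_m) (f : {ffun 'I_k.-1 -> 'I_(nverts k s m)}) :=
  i |: [set f t | t : 'I_k.-1] == scycle_edge k s m j.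
have step1 : forall f, adj_tensor R k s m i f * \prod_(t < k.-1) x (f t) =
   c * \sum_(j : 'I_m) (if A j f then \prod_(t < k.-1) x (f t) else 0).
  move=> f; rewrite /adj_tensor; case: ifP.
    case/existsP => j0 hj0; rewrite (bigD1 j0) //= /A hj0 [X in _ + X]big1 ?addr0 //.
    move=> j hj; case: ifP => // hA; exfalso; move/eqP: hj; apply.
    apply: (@edge_inj k s m q) => //.
    by move/eqP: hA => <-; move/eqP: hj0 => <-.
  move=> hne; rewrite mul0r [X in c * X]big1 ?mulr0 //.
  move=> j _; case: ifP => // hA.
  have h2 : [exists j0 : 'I_m, i |: [set f t | t : 'I_k.-1] == scycle_edge k s m j0].
    by apply/existsP; exists j.
  by rewrite h2 in hne.
rewrite (eq_bigr _ (fun f _ => step1 f)) -mulr_sumr exchange_big /=.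
rewrite [RHS]big_mkcond mulr_sumr; apply: eq_bigr => j _.
rewrite -big_mkcond /=.
case: ifP => iE.
  have cE : #|scycle_edge k s m j| = k.-1.+1 by rewrite prednK // (@edge_card k s m q j r0 hk qm).
  rewrite (eq_bigr (fun _ => \prod_(v in scycle_edge k s m j :\ i) x v)); last first.
    by move=> f hf; apply: F_prod.
  rewrite sumr_const.
  have -> : #|[pred f | A j f]| = (k.-1)`!.
    by rewrite -(@F_card _ k.-1 i _ cE iE); apply: eq_card => f; rewrite !inE.
  rewrite -mulr_natl mulrA /c mulVf ?mul1r //.
  by rewrite pnatr_eq0 -lt0n fact_gt0.
rewrite big1 ?mulr0 // => f hf; exfalso; move/negP: iE; apply.
by move/eqP: hf => <-; rewrite in_setU1 eqxx.
Qed.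

Definition lab (R : realType) k s m g (v : 'I_(nverts k s m)) : R :=
  if (wv (nverts k s m) v %% (k - s) == 0)%N && (g %| wv (nverts k s m) v %/ (k - s))%N
  then -1 else 1.

Lemma edge_prod (R : realType) k s m q g (j : 'I_m) :
  (0 < k - s)%N -> k = (q * (k - s))%N -> (q < m)%N -> (0 < g)%N -> (g %| q)%N ->
  (g %| m)%N -> odd (q %/ g) ->
  \prod_(v in scycle_edge k s m j) lab R k s m g v = -1.
Proof.
move=> r0 hk qm g0 gq gm oq.
have kn := @k_lt_n k s m q r0 hk qm.
have n0 : (0 < nverts k s m)%N by lia.
pose phi (t : 'I_k) : 'I_(nverts k s m) := Ordinal (ltn_pmod (j * (k - s) + t.+1) n0).
have -> : scycle_edge k s m j = [set phi t | t in 'I_k].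
  apply/setP => v; rewrite inE; apply/existsP/imsetP.
    by case=> t /eqP h; exists t => //; apply: val_inj.
  by case=> t _ ->; exists t.
rewrite big_imset /=; last first.
  move=> t1 t2 _ _ /(congr1 val) /= /eqP.
  have h1 := ltn_ord t1; have h2 := ltn_ord t2.
  rewrite -!addSnnS eqn_modDl !modn_small; try lia.
  by move/eqP => h; apply: val_inj.
have hl : forall t : 'I_k, lab R k s m g (phi t) =
    (-1) ^+ (((t %% (k - s) == 0) && (g %| j + t %/ (k - s)))%N : nat).
  move=> t; rewrite /lab /= -(addn1 t) addnA wvE // /nverts cell_phi blk_phi //.
  rewrite /dvdn (modn_dvdm _ gm) -/(dvdn g _).
  by case: ifP.
rewrite (eq_bigr _ (fun t _ => hl t)).
rewrite -(big_morph _ (exprD (-1 : R)) (expr0 (-1 : R))).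
have e1 : forall K, K = (q * (k - s))%N ->
   (\sum_(t < K) ((t %% (k - s) == 0) && (g %| j + t %/ (k - s))))%N = (q %/ g)%N.
  move=> K ->; rewrite sum_blocks //.
  have -> : q = (g * (q %/ g))%N by rewrite mulnC divnK.
  by rewrite sum_window // mulKn.
by rewrite e1 // -signr_odd oq expr1.
Qed.

Definition Ssum (R : realType) k s m (x : 'I_(nverts k s m) -> R) i :=
  \sum_(j : 'I_m | i \in scycle_edge k s m j) \prod_(v in scycle_edge k s m j :\ i) x v.

Lemma formula_Q (R : realType) k s m q (x : 'I_(nverts k s m) -> R) i :
  (0 < k - s)%N -> k = (q * (k - s))%N -> (q < m)%N -> (0 < q)%N -> (0 < k)%N ->
  tensor_apply R k (nverts k s m) (slap_tensor R k s m) x i =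
  q%:R * x i ^+ k.-1 + Ssum R k s m x i.
Proof.
move=> r0 hk qm q0 k0; rewrite /tensor_apply /slap_tensor.
under eq_bigr do rewrite mulrDl.
by rewrite big_split /= deg_part (@adj_part R k s m q x i r0 hk qm q0 k0) (@deg_eq k s m q i r0 hk qm).
Qed.

Lemma formula_L (R : realType) k s m q (x : 'I_(nverts k s m) -> R) i :
  (0 < k - s)%N -> k = (q * (k - s))%N -> (q < m)%N -> (0 < q)%N -> (0 < k)%N ->
  tensor_apply R k (nverts k s m) (lap_tensor R k s m) x i =
  q%:R * x i ^+ k.-1 - Ssum R k s m x i.
Proof.
move=> r0 hk qm q0 k0; rewrite /tensor_apply /lap_tensor.
under eq_bigr do rewrite mulrBl.
by rewrite sumrB /= deg_part (@adj_part R k s m q x i r0 hk qm q0 k0) (@deg_eq k s m q i r0 hk qm).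
Qed.

Lemma card_deg k s m q (i : 'I_(nverts k s m)) :
  (0 < k - s)%N -> k = (q * (k - s))%N -> (q < m)%N ->
  #|[pred j : 'I_m | i \in scycle_edge k s m j]| = q.
Proof.
move=> r0 hk qm; rewrite -(@deg_eq k s m q i r0 hk qm) /scycle_deg.
by apply: eq_card => j; rewrite [RHS]in_set.
Qed.

Lemma upper (R : realType) k s m q (T : tensor R k (nverts k s m)) (sg : R) mu :
  (0 < k - s)%N -> k = (q * (k - s))%N -> (q < m)%N -> (0 < q)%N -> (0 < k)%N ->
  `|sg| = 1 ->
  (forall x i, tensor_apply R k _ T x i = q%:R * x i ^+ k.-1 + sg * Ssum R k s m x i) ->
  is_H_eigenvalue R k (nverts k s m) T mu -> mu <= (2 * q)%:R.
Proof.
move=> r0 hk qm q0 k0 hsg hT [x [[i0 hi0] he]].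
case: (@arg_maxP _ _ _ i0 xpredT (fun i => `|x i|)) => // i _ imax.
set M := `|x i|.
have M0 : 0 < M by apply: (lt_le_trans _ (imax i0 isT)); rewrite normr_gt0.
have MK : 0 < M ^+ k.-1 by rewrite exprn_gt0.
have hS : `|Ssum R k s m x i| <= q%:R * M ^+ k.-1.
  rewrite /Ssum; apply: le_trans (ler_norm_sum _ _ _) _.
  apply: (@le_trans _ _ (\sum_(j : 'I_m | i \in scycle_edge k s m j) M ^+ k.-1)).
    apply: ler_sum => j hj; rewrite normr_prod.
    apply: (@le_trans _ _ (\prod_(v in scycle_edge k s m j :\ i) M)).
      by apply: ler_prod => v _; rewrite normr_ge0 /=; apply: imax.
    rewrite prodr_const.
    have cE := @edge_card k s m q j r0 hk qm.
    have -> : #|scycle_edge k s m j :\ i| = k.-1.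
      move: cE; rewrite (cardsD1 i) hj add1n => cE.
      have h : (#|scycle_edge k s m j :\ i|.+1).-1 = k.-1 by rewrite cE.
      exact h.
    by [].
  rewrite sumr_const (@card_deg k s m q i r0 hk qm) mulr_natl.
  by [].
have e := he i; rewrite hT in e.
have e2 : (mu - q%:R) * x i ^+ k.-1 = sg * Ssum R k s m x i.
  by rewrite mulrBl -e; ring.
have e3 : `|mu - q%:R| * M ^+ k.-1 <= q%:R * M ^+ k.-1.
  by rewrite /M -normrX -normrM e2 normrM hsg mul1r normrX.
rewrite ler_pM2r // in e3.
have := ler_norm (mu - q%:R).
rewrite natrM; move: e3; lra.
Qed.

Theorem proposition5p1 (R : realType) (k s m q : nat) :
  (1 <= s)%N -> (s <= k - 1)%N -> (0 < q)%N -> k = (q * (k - s))%N -> (3 <= k)%N ->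
  (2 * k - s <= nverts k s m)%N ->
  is_regular k s m /\
  is_largest_H_eigenvalue R k (nverts k s m) (slap_tensor R k s m) (2 * q)%:R /\
  (~~ odd k ->
   (odd q \/ exists t0 l0 : nat,
       (0 < t0)%N /\ q = (2 ^ t0 * (2 * l0 + 1))%N /\ (2 ^ t0 %| m)%N) ->
   is_largest_H_eigenvalue R k (nverts k s m) (lap_tensor R k s m) (2 * q)%:R).
Proof.
move=> s1 sk q0 hk k3 hn.
have r0 : (0 < k - s)%N by lia.
have k0 : (0 < k)%N by lia.
have qm : (q < m)%N.
  have e : (2 * k - s = q.+1 * (k - s))%N by rewrite [in RHS]mulSnr -hk; lia.
  by move: hn; rewrite e /nverts leq_pmul2r.
have n0 : (0 < nverts k s m)%N by have := @k_lt_n k s m q r0 hk qm; lia.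
have upQ : forall mu, is_H_eigenvalue R k _ (slap_tensor R k s m) mu -> mu <= (2 * q)%:R.
  move=> mu; apply: (@upper R k s m q _ 1) => //; first by rewrite normr1.
  by move=> x i; rewrite (@formula_Q R k s m q x i r0 hk qm q0 k0) mul1r.
have upL : forall mu, is_H_eigenvalue R k _ (lap_tensor R k s m) mu -> mu <= (2 * q)%:R.
  move=> mu; apply: (@upper R k s m q _ (-1)) => //; first by rewrite normrN1.
  by move=> x i; rewrite (@formula_L R k s m q x i r0 hk qm q0 k0) mulN1r.
split.
  by move=> i j; rewrite (@deg_eq k s m q i r0 hk qm) (@deg_eq k s m q j r0 hk qm).
split.
  split => //; exists (fun _ => 1); split; first by exists (Ordinal n0); rewrite oner_neq0.
  move=> i; rewrite (@formula_Q R k s m q _ i r0 hk qm q0 k0) /Ssum.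
  rewrite (eq_bigr (fun _ => 1)); last by move=> j _; rewrite big1_eq.
  rewrite sumr_const (@card_deg k s m q i r0 hk qm) expr1n !mulr1 natrM.
  by rewrite -[1 *+ q]/(q%:R); lra.
move=> ke hq.
have oq := @odd_qg q m q0 hq.
set g := gcdn q m in oq.
have g0 : (0 < g)%N by rewrite gcdn_gt0 q0.
have gq : (g %| q)%N by apply: dvdn_gcdl.
have gm : (g %| m)%N by apply: dvdn_gcdr.
split => //; exists (lab R k s m g); split.
  exists (Ordinal n0); rewrite /lab; case: ifP => _.
    by rewrite oppr_eq0 oner_neq0.
  by rewrite oner_neq0.
move=> i; rewrite (@formula_L R k s m q _ i r0 hk qm q0 k0) /Ssum.
have sq : lab R k s m g i * lab R k s m g i = 1.
  by rewrite /lab; case: ifP => _; rewrite ?mulrNN mulr1.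
have hP : forall j : 'I_m, i \in scycle_edge k s m j ->
    \prod_(v in scycle_edge k s m j :\ i) lab R k s m g v = - lab R k s m g i.
  move=> j hj.
  have := @edge_prod R k s m q g j r0 hk qm g0 gq gm oq.
  rewrite (big_setD1 _ hj) => hprod0.
  have hprod : lab R k s m g i * \prod_(v in scycle_edge k s m j :\ i) lab R k s m g v = -1 := hprod0.
  have := congr1 (fun z => lab R k s m g i * z) hprod; rewrite /= mulrA sq mul1r => ->.
  by rewrite mulrN1.
rewrite (eq_bigr (fun _ => - lab R k s m g i)) //.
rewrite sumr_const (@card_deg k s m q i r0 hk qm).
have ok : odd k.-1 by apply: oddpred.
have hx : lab R k s m g i ^+ k.-1 = lab R k s m g i.
  by rewrite /lab; case: ifP => _; rewrite ?expr1n // -signr_odd ok expr1.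
rewrite hx -mulr_natl natrM.
ring.
Qed.
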